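(* In the setting where $M$ has $3$ edges, $p,q\in(0,1]$, $(\omega_e)_{e\in E_\varGamma}$ and $(\omega_{e,j,g})$ are mutually independent Bernoulli variables with means $p$ and $q$ respectively, and $$\widehat C_M=\frac{1}{3pq}\sum_{e\in E_\varGamma}\sum_{j=1}^{3}\sum_{g\in E_j(e)}\omega_e\,\omega_{e,j,g}\,\eta(W_{e,j,g}),$$ for every $\varepsilon>0$ (assuming $C_M>0$) we have $\Pr\big[|\widehat C_M-C_M|\ge\varepsilon C_M\big]\le\frac{1-pq}{pq\,\varepsilon^2}$.
   Context: A temporal graph $\varGamma=(V_\varGamma,E_\varGamma)$ consists of a finite vertex set $V_\varGamma$ and a finite sequence $E_\varGamma$ of $m$ temporal edges $(u,v,t)$, $u,v\in V_\varGamma$, $t\in\mathbb{R}^+$, with distinct timestamps. A temporal motif $M$ is an ordered sequence of $l$ directed edges $\langle e'_1=(u'_1,v'_1),\dots,e'_l=(u'_l,v'_l)\rangle$ on a vertex set $V_M$ whose underlying graph is connected; here $l=3$ (and $|V_M|=3$). Fix $\delta\ge0$. A sequence $\langle (w_1,x_1,t_1),\dots,(w_l,x_l,t_l)\rangle$ of edges of $E_\varGamma$ with $t_1<\dots<t_l$ is a $\delta$-instance of $M$ if there is a bijection $f$ from its vertices to $V_M$ with $f(w_i)=u'_i$, $f(x_i)=v'_i$ for all $i$, and $t_l-t_1\le\delta$. $C_M$ is the number of $\delta$-instances of $M$ in $\varGamma$; $\eta_j(e)$ is the number of $\delta$-instances of $M$ whose $j$-th edge is $e$. Wedge data: for each $e\in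 E_\varGamma$ and $j\in\{1,2,3\}$ there is a finite set $E_j(e)\subseteq E_\varGamma$ and for each $g\in E_j(e)$ a nonnegative integer $\eta(W_{e,j,g})$ (the number of $\delta$-instances of $M$ containing the temporal wedge formed by $e$ and $g$, with $e$ mapped to $e'_j$), such that $\sum_{g\in E_j(e)}\eta(W_{e,j,g})=\eta_j(e)$. *)

(* Defs.v *)
From HB Require Import structures.
From mathcomp Require Import all_boot all_order all_algebra.
From mathcomp Require Import all_classical all_reals all_analysis.
Set Implicit Arguments. Unset Strict Implicit. Unset Printing Implicit Defensive.
Import Order.TTheory GRing.Theory Num.Theory.
Local Open Scope ring_scope.

(* A temporal graph is given by a finite vertex type V and a sequence of m
   temporal edges, edge k : 'I_m being (src k, dst k, time k).
   A 3-edge temporal motif on the vertex set V_M = 'I_3 is given by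
   mu : 'I_3 -> 'I_3 * 'I_3, mu i = (u'_i, v'_i). *)

Definition motif_rel (mu : 'I_3 -> 'I_3 * 'I_3) : rel 'I_3 :=
  fun a b => [exists i, (mu i == (a, b)) || (mu i == (b, a))].

Definition motif_connected (mu : 'I_3 -> 'I_3 * 'I_3) : Prop :=
  forall a b : 'I_3, connect (motif_rel mu) a b.

Section Instances.
Variables (R : realType) (V : finType) (m : nat).
Variables (src dst : 'I_m -> V) (time : 'I_m -> R).
Variables (mu : 'I_3 -> 'I_3 * 'I_3) (delta : R).

Definition inst_vertices (e : {ffun 'I_3 -> 'I_m}) : {set V} :=
  [set v | [exists i, (src (e i) == v) || (dst (e i) == v)]].

Definition is_instance (e : {ffun 'I_3 -> 'I_m}) : bool :=
  [&& time (e ord0) < time (e (inord 1)),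
      time (e (inord 1)) < time (e (inord 2)),
      time (e (inord 2)) - time (e ord0) <= delta &
      [exists f : {ffun V -> 'I_3},
        [&& [forall i, (f (src (e i)) == (mu i).1) && (f (dst (e i)) == (mu i).2)],
            [forall v in inst_vertices e, forall w in inst_vertices e,
               (f v == f w) ==> (v == w)] &
            [forall a, exists v in inst_vertices e, f v == a]]]].

Definition motif_count : nat := #|[set e | is_instance e]|.

Definition eta_at (j : 'I_3) (e0 : 'I_m) : nat :=
  #|[set e | is_instance e & e j == e0]|.

End Instances.

Definition mutually_independent d (T : measurableType d) (R : realType)
  (P : probability T R) (I : finType) (A : {set I}) (X : I -> T -> bool) : Prop :=
  forall (S : {set I}) (b : I -> bool), S \subset A ->
    fine (P [set t | forall i, i \in S -> X i t = b i]%classic)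
    = \prod_(i in S) fine (P [set t | X i t = b i]%classic).

(* Index type of the Bernoulli variables: inl e is omega_e,
   inr (e, j, g) is omega_{e,j,g}. *)
Definition var_index (m : nat) : finType :=
  ('I_m + ('I_m * 'I_3 * 'I_m))%type.

Definition relevant_vars (m : nat) (Ej : 'I_m -> 'I_3 -> {set 'I_m})
  : {set var_index m} :=
  [set x : var_index m | match x with
                         | inl _ => true
                         | inr egj => egj.2 \in Ej egj.1.1 egj.1.2 end].

Definition estimator d (T : measurableType d) (R : realType) (m : nat)
  (p q : R) (Ej : 'I_m -> 'I_3 -> {set 'I_m}) (etaW : 'I_m -> 'I_3 -> 'I_m -> nat)
  (X : var_index m -> T -> bool) (t : T) : R :=
  (3 * p * q)^-1 *
  \sum_(e : 'I_m) \sum_(j : 'I_3) \sum_(g in Ej e j)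
     ((X (inl e) t)%:R * (X (inr (e, j, g)) t)%:R * (etaW e j g)%:R).

(* Main.v *)
Require Import Defs.
From HB Require Import structures.
From mathcomp Require Import all_boot all_order all_algebra.
From mathcomp Require Import all_classical all_reals all_analysis.
From mathcomp Require Import ring lra.
Import Order.TTheory GRing.Theory Num.Theory.
Local Open Scope ring_scope.
Lemma P_fiber d (T : measurableType d) (R : realType) (P : probability T R)
  (K : finType) (v : T -> K) :
  (forall k, measurable [set t | v t = k]%classic) ->
  forall Q : pred K, P [set t | Q (v t)]%classic
    = (\sum_(k | Q k) fine (P [set t | v t = k]%classic))%:E.
Proof.
move=> mv Q.
have gen : forall s, uniq s ->
  measurable [set t | (v t \in s) && Q (v t)]%classic /\
  P [set t | (v t \in s) && Q (v t)]%classic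
   = (\sum_(k <- s | Q k) P [set t | v t = k]%classic)%E.
  elim => [|k s IH] /=.
    move=> _; have -> : [set t | (v t \in [::]) && Q (v t)]%classic = set0.
      by apply/seteqP; split => t //=; rewrite in_nil.
    by rewrite big_nil measure0; split.
  move/andP=> [kns us]; case: (IH us) => ms Ps; rewrite big_cons.
  case Qk: (Q k).
    have E : [set t | (v t \in k :: s) && Q (v t)]%classic =
      ([set t | v t = k] `|` [set t | (v t \in s) && Q (v t)])%classic.
      apply/seteqP; split => t /=.
        rewrite in_cons; case/andP => /orP [/eqP -> | ->] Qt; [by left|by right].
      case => [-> | /andP [ts Qt]]; first by rewrite in_cons eqxx.
      by rewrite in_cons ts orbT.
    rewrite E; split; first exact: measurableU.
    rewrite measureU //; first by congr (_ + _)%E; exact: Ps.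
    apply/seteqP; split => t //= [vk /andP [ts _]].
    by move: kns; rewrite -vk ts.
  have -> : [set t | (v t \in k :: s) && Q (v t)]%classic =
     [set t | (v t \in s) && Q (v t)]%classic.
    apply/seteqP; split => t /=; rewrite in_cons.
      by case/andP => /orP [/eqP vk | ->] Qt //; move: Qt; rewrite vk Qk.
    by case/andP => -> ->; rewrite orbT.
  by split.
case: (gen _ (index_enum_uniq K)) => _.
have -> : [set t | (v t \in index_enum K) && Q (v t)]%classic = [set t | Q (v t)]%classic.
  by apply/seteqP; split => t /=; rewrite mem_index_enum.
move=> ->; rewrite -sumEFin; apply: eq_bigr => k _.
by rewrite fineK // fin_num_measure.
Qed.
Lemma sum_eta (R : realType) (V : finType) (m : nat)
  (src dst : 'I_m -> V) (time : 'I_m -> R) (mu : 'I_3 -> 'I_3 * 'I_3) (delta : R) (j : 'I_3) :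
  (\sum_(e : 'I_m) eta_at src dst time mu delta j e = motif_count src dst time mu delta)%N.
Proof.
rewrite /motif_count /eta_at [RHS]/= -[in RHS]sum1_card.
rewrite (partition_big (fun x : {ffun 'I_3 -> 'I_m} => x j) predT) //.
apply: eq_bigr => e _; rewrite -sum1_card; apply: eq_bigl => x.
by rewrite !inE.
Qed.
Theorem mainTheorem6
  (R : realType) (V : finType) (m : nat)
  (src dst : 'I_m -> V) (time : 'I_m -> R)
  (time_pos : forall k, 0 < time k) (time_inj : injective time)
  (mu : 'I_3 -> 'I_3 * 'I_3) (mu_conn : motif_connected mu)
  (delta : R) (delta_ge0 : 0 <= delta)
  (Ej : 'I_m -> 'I_3 -> {set 'I_m}) (etaW : 'I_m -> 'I_3 -> 'I_m -> nat)
  (hW : forall e j, \sum_(g in Ej e j) etaW e j g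
                    = eta_at src dst time mu delta j e)
  (p q : R) (hp : 0 < p <= 1) (hq : 0 < q <= 1)
  (d : measure_display) (T : measurableType d) (P : probability T R)
  (X : var_index m -> T -> bool)
  (X_meas : forall i, i \in relevant_vars Ej -> measurable [set t | X i t]%classic)
  (X_indep : mutually_independent P (relevant_vars Ej) X)
  (X_p : forall e, P [set t | X (inl e) t]%classic = p%:E)
  (X_q : forall e j g, g \in Ej e j -> P [set t | X (inr (e, j, g)) t]%classic = q%:E)
  (eps : R) (heps : 0 < eps)
  (hC : (0 < motif_count src dst time mu delta)%N) :
  let C := (motif_count src dst time mu delta)%:R : R in
  (P [set t | (eps * C <= `| estimator p q Ej etaW X t - C |)%R]%classic
    <= ((1 - p * q) / (p * q * eps ^+ 2))%R%:E)%E.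
Proof.
cbv zeta.
set C := ((motif_count src dst time mu delta)%:R : R).
set A := relevant_vars Ej.
pose vec (t : T) : {ffun var_index m -> bool} := [ffun i => (i \in A) && X i t].
have mv : forall k, measurable [set t | vec t = k]%classic.
  move=> k.
  have -> : [set t | vec t = k]%classic =
     (\bigcap_(i in [set: var_index m]) [set t | ((i \in A) && X i t) = k i])%classic.
    apply/seteqP; split => t /=.
      by move=> <- i _; rewrite ffunE.
    by move=> H; apply/ffunP => i; rewrite ffunE; apply: H.
  apply: fin_bigcap_measurable; first exact: finite_finset.
  move=> i _; case iA : (i \in A); case ki : (k i) => /=.
  - exact: X_meas.
  - have -> : [set t | X i t = false]%classic = (~` [set t | X i t])%classic.
      by apply/seteqP; split => t /=; case: (X i t).
    exact/measurableC/X_meas.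
  - have -> : [set t : T | false = true]%classic = set0 by apply/seteqP; split.
    exact: measurable0.
  - have -> : [set t : T | false = false]%classic = setT by apply/seteqP; split.
    exact: measurableT.
pose pi k := fine (P [set t | vec t = k]%classic).
have HPf := @P_fiber _ _ _ P _ vec mv.
have pi0 : forall k, 0 <= pi k by move=> k; apply: fine_ge0; apply: measure_ge0.
have pi1 : \sum_k pi k = 1.
  have := HPf predT.
  have -> : [set t | predT (vec t)]%classic = setT by apply/seteqP; split.
  by rewrite probability_setT => -[].
have Hind : forall s : seq (var_index m), uniq s -> {subset s <= A} ->
    \sum_k pi k * (all (fun i => (k : {ffun var_index m -> bool}) i) s)%:R
    = \prod_(i <- s) fine (P [set t | X i t]%classic).
  move=> s us sA.
  have -> : \sum_k pi k * (all (fun i => (k : {ffun var_index m -> bool}) i) s)%:R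
          = \sum_(k | all (fun i => (k : {ffun var_index m -> bool}) i) s) pi k.
    rewrite [RHS]big_mkcond; apply: eq_bigr => k _.
    by case: (all _ _); rewrite ?mulr1 ?mulr0.
  have := HPf (fun k : {ffun var_index m -> bool} => all (fun i => (k : {ffun var_index m -> bool}) i) s).
  move/(congr1 fine) => /= <-.
  have sub : [set x in s] \subset A.
    by apply/fintype.subsetP => x; rewrite inE => /sA.
  have := X_indep _ (fun _ => true) sub.
  have -> : [set t | forall i, i \in [set x in s] -> X i t = (fun=> true) i]%classic
          = [set t | all (fun i => vec t i) s]%classic.
    apply/seteqP; split => t /=.
      move=> H; apply/allP => i is_; rewrite ffunE (sA _ is_) /=.
      by apply: H; rewrite inE.
    move=> /allP H i; rewrite inE => is_; have := H i is_.
    by rewrite ffunE (sA _ is_).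
  move=> ->; rewrite (big_uniq _ us); apply: eq_bigl => i.
  by rewrite inE.
pose relv (x : 'I_m * 'I_3 * 'I_m) := x.2 \in Ej x.1.1 x.1.2.
pose w (x : 'I_m * 'I_3 * 'I_m) : R := (etaW x.1.1 x.1.2 x.2)%:R.
pose bb (k : {ffun var_index m -> bool}) i : R := (k i)%:R.
pose G k := \sum_(x | relv x) bb k (inl x.1.1) * bb k (inr x) * w x.
pose W := \sum_(x | relv x) w x.
have hest : forall t, estimator p q Ej etaW X t = (3 * p * q)^-1 * G (vec t).
  move=> t.
  rewrite /estimator.
  rewrite /G; apply: (congr1 (fun z => _ * z)).
  rewrite pair_big_dep pair_big_dep; apply: eq_big => [[[e j] g]|[[e j] g]] //= Hx.
  by rewrite /bb /vec !ffunE !inE /= Hx.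
have hW3 : W = 3 * C.
  rewrite /W /w -(pair_big_dep xpredT (fun p0 g => g \in Ej p0.1 p0.2) (fun p0 g => (etaW p0.1 p0.2 g)%:R : R)).
  rewrite -(pair_big_dep xpredT (fun e j => true) (fun e j => \sum_(g in Ej e j) (etaW e j g)%:R : R)).
  under eq_bigr => e _ do under eq_bigr => j _ do rewrite -natr_sum hW.
  rewrite exchange_big /=.
  under eq_bigr => j _ do rewrite -natr_sum sum_eta.
  by rewrite sumr_const card_ord /C mulr_natl.
have G0 : forall k, 0 <= G k.
  move=> k; apply: sumr_ge0 => x _; rewrite /bb /w.
  by apply: mulr_ge0; first apply: mulr_ge0.
have GW : forall k, G k <= W.
  move=> k; apply: ler_sum => x _; rewrite /bb.
  by case: (k _); case: (k _); rewrite /= ?mul1r ?mul0r ?lexx ?ler0n.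
have hE2 : forall x, relv x ->
    \sum_k pi k * (bb k (inl x.1.1) * bb k (inr x)) = p * q.
  case=> [[e j] g] /= Hx.
  have := Hind [:: inl e; inr (e, j, g)].
  have -> : uniq [:: inl e; inr (e, j, g) : var_index m] by [].
  move=> /(_ isT) H.
  have {H} := H _.
  have sA : {subset [:: inl e; inr (e, j, g) : var_index m] <= A}.
    by move=> i; rewrite !inE => /orP [/eqP -> | /eqP ->].
  move=> /(_ sA) H; rewrite big_cons big_cons big_nil mulr1 X_p X_q // /= in H.
  rewrite -H; apply: eq_bigr => k _; rewrite /bb.
  by case: (k (inl e)); case: (k (inr _)); rewrite /= ?mulr1 ?mul1r ?mulr0 ?mul0r.
have EG : \sum_k pi k * G k = p * q * W.
  rewrite /G /W.
  under eq_bigr => k _ do rewrite mulr_sumr.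
  rewrite exchange_big /= mulr_sumr; apply: eq_bigr => x Hx.
  under eq_bigr => k _ do rewrite mulrA.
  by rewrite -mulr_suml hE2.
have EG2 : \sum_k pi k * G k ^+ 2 <= W * (p * q * W).
  rewrite -EG mulr_sumr; apply: ler_sum => k _.
  rewrite [leRHS]mulrCA; apply: (ler_wpM2l (pi0 k)); rewrite expr2.
  exact: (ler_wpM2r (G0 k) (GW k)).
set c := 3 * p * q.
have -> : [set t | (eps * C <= `|estimator p q Ej etaW X t - C|)%R]%classic =
   [set t | (fun k : {ffun var_index m -> bool} =>
               eps * C <= `|c^-1 * G k - C|) (vec t)]%classic.
  by apply/seteqP; split => t /=; rewrite hest.
rewrite (HPf (fun k : {ffun var_index m -> bool} => eps * C <= `|c^-1 * G k - C|)) lee_fin.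
have Cpos : 0 < C by rewrite /C ltr0n.
have p0 : 0 < p by case/andP: hp.
have q0 : 0 < q by case/andP: hq.
have eC0 : 0 < (eps * C) ^+ 2 by apply: exprn_gt0; apply: mulr_gt0.
apply: (@le_trans _ _ (\sum_k pi k * ((c^-1 * G k - C) ^+ 2 / (eps * C) ^+ 2))).
  rewrite [leLHS]big_mkcond; apply: ler_sum => k _; case: ifP => H.
    rewrite -[leLHS]mulr1; apply: (ler_wpM2l (pi0 k)).
    rewrite ler_pdivlMr // mul1r.
    have h0 : 0 <= eps * C by apply: mulr_ge0; apply: ltW.
    rewrite -(real_normK (num_real (c^-1 * G k - C))) !expr2; by apply: ler_pM.
  apply: mulr_ge0 (pi0 k) _; apply: divr_ge0; apply: sqr_ge0.
under eq_bigr => k _ do rewrite mulrA.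
rewrite -mulr_suml.
have Hexp : \sum_k pi k * (c^-1 * G k - C) ^+ 2
   = c^-1 ^+ 2 * \sum_k pi k * G k ^+ 2 - 2 * C * c^-1 * \sum_k pi k * G k
     + C ^+ 2 * \sum_k pi k.
  rewrite !mulr_sumr -sumrB -big_split; apply: eq_bigr => k _ /=; ring.
rewrite Hexp EG pi1 mulr1.
have hp0 : p != 0 by apply: lt0r_neq0.
have hq0 : q != 0 by apply: lt0r_neq0.
have hC0 : C != 0 by apply: lt0r_neq0.
have he0 : eps != 0 by apply: lt0r_neq0.
have c0 : c != 0 by rewrite /c; apply: lt0r_neq0; apply: mulr_gt0 => //; apply: mulr_gt0.
have k1 : c^-1 ^+ 2 * \sum_k pi k * G k ^+ 2 <= C ^+ 2 / (p * q).
  apply: le_trans (_ : c^-1 ^+ 2 * (W * (p * q * W)) <= _).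
    by apply: ler_wpM2l => //; apply: sqr_ge0.
  rewrite hW3 /c le_eqVlt; apply/orP; left; apply/eqP; field.
  by rewrite hp0 hq0.
have k2 : 2 * C * c^-1 * (p * q * W) = 2 * C ^+ 2.
  rewrite hW3 /c; field; by rewrite ?hp0 ?hq0 ?hC0 ?he0 ?pnatr_eq0.
rewrite k2 ler_pdivrMr //.
apply: le_trans (_ : C ^+ 2 / (p * q) - 2 * C ^+ 2 + C ^+ 2 <= _).
  by rewrite lerD2r lerD2r.
rewrite le_eqVlt; apply/orP; left; apply/eqP; field.
by rewrite ?hp0 ?hq0 ?hC0 ?he0 ?pnatr_eq0.
Qed.
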